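(* Let $k\geq 2$ be an integer and let $l\in\{1,2\}$. Then there are infinitely many balanced bipartite graphs $G$ with $\delta(G)=k$ and $f(G)=\frac{|V(G)|}{2}+l$.
   Context: All graphs are finite and simple. A balanced bipartite graph is a bipartite graph with a given bipartition $(V_1,V_2)$ where $|V_1|=|V_2|$. $\delta(G)$ denotes the minimum degree of $G$. The forest number $f(G)$ is the maximum cardinality of a subset $S\subseteq V(G)$ such that the induced subgraph $G[S]$ is a forest. *)

(* Defs.v *)
From mathcomp Require Import all_boot.
Set Implicit Arguments. Unset Strict Implicit. Unset Printing Implicit Defensive.

Definition simple_graph (T : finType) (e : rel T) : Prop :=
  symmetric e /\ irreflexive e.

Definition balanced_bipartite (T : finType) (e : rel T) (V1 V2 : {set T}) : Prop :=
  [/\ [disjoint V1 & V2], V1 :|: V2 = [set: T], #|V1| = #|V2| &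
      forall x y, e x y -> (x \in V1) && (y \in V2) || (x \in V2) && (y \in V1)].

Definition deg (T : finType) (e : rel T) (x : T) : nat := #|[set y | e x y]|.

Definition min_degree_eq (T : finType) (e : rel T) (k : nat) : Prop :=
  (forall x, k <= deg e x) /\ (exists x, deg e x = k).

Definition induced_forest (T : finType) (e : rel T) (S : {set T}) : Prop :=
  ~ (exists c : seq T, [&& uniq c, 3 <= size c, all (mem S) c & cycle e c]).

Definition forest_number_eq (T : finType) (e : rel T) (m : nat) : Prop :=
  (exists S : {set T}, induced_forest e S /\ #|S| = m) /\
  (forall S : {set T}, induced_forest e S -> #|S| <= m).

(* Main.v *)
Require Import Defs.
From mathcomp Require Import all_boot zify.
Set Implicit Arguments. Unset Strict Implicit. Unset Printing Implicit Defensive.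

Lemma card_cnt n (P : pred nat) : #|[set y : 'I_n | P (nat_of_ord y)]| = count P (iota 0 n).
Proof.
rewrite cardE (_ : enum _ = filter (mem [set y : 'I_n | P (nat_of_ord y)]) (enum 'I_n)); last by rewrite enumT.
rewrite size_filter -val_enum_ord count_map; apply: eq_count => x /=. by rewrite inE.
Qed.

Lemma cnt_int n a b : b <= n -> count (fun j => a <= j < b) (iota 0 n) = b - a.
Proof.
move=> hb.
case: (leqP a b) => hab; last first.
  rewrite (eq_count (a2:=pred0)) ?count_pred0; [lia|]. move=> j /=. lia.
have -> : n = a + (b - a + (n - b)) by lia.
rewrite iotaD iotaD !count_cat.
rewrite (eq_in_count (a2:=pred0)) ?count_pred0; last first.
  move=> j; rewrite mem_iota /=; lia.
rewrite (eq_in_count (a1 := fun j => a <= j < b) (a2:=predT) (s := iota (0+a) _)) ?count_predT ?size_iota; last first.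
  move=> j; rewrite mem_iota /=; lia.
rewrite (eq_in_count (a2:=pred0)) ?count_pred0; last first.
  move=> j; rewrite mem_iota /=; lia.
lia.
Qed.

Lemma card_iv n a b (A : {set 'I_n}) : b <= n ->
  (forall y, (y \in A) = (a <= nat_of_ord y < b)) -> #|A| = b - a.
Proof.
move=> hb hA.
rewrite (eq_card (B := [set y : 'I_n | a <= nat_of_ord y < b])); last by move=> y; rewrite inE hA.
by rewrite (@card_cnt n (fun j => a <= j < b)) cnt_int.
Qed.

Lemma card_le_iv n a b (A : {set 'I_n}) : b <= n ->
  (forall y, y \in A -> a <= nat_of_ord y < b) -> #|A| <= b - a.
Proof.
move=> hb hA.
rewrite -(@card_iv n a b [set y : 'I_n | a <= nat_of_ord y < b]) //; last by move=> y; rewrite inE.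
apply: subset_leq_card; apply/subsetP => y /hA; by rewrite inE.
Qed.

Lemma card_ge_iv n a b (A : {set 'I_n}) : b <= n ->
  (forall y, a <= nat_of_ord y < b -> y \in A) -> b - a <= #|A|.
Proof.
move=> hb hA.
rewrite -(@card_iv n a b [set y : 'I_n | a <= nat_of_ord y < b]) //; last by move=> y; rewrite inE.
apply: subset_leq_card; apply/subsetP => y; rewrite inE; exact: hA.
Qed.

Lemma nocyc_core (T:eqType) (e: rel T) (S Y: pred T) :
 (forall y a b, Y y -> S a -> S b -> e y a -> e b y -> a = b) ->
 forall y z1 s, Y y -> 0 < size s -> uniq [:: y, z1 & s] -> all S [:: y, z1 & s] ->
   cycle e [:: y, z1 & s] -> False.
Proof.
move=> H y z1 [//|z2 r] Yy _ U A C.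
move: C; rewrite /= rcons_path => /and4P[e1 _ _ e2].
move: A => /= /andP[_ /andP[S1 /andP[S2 /allP Sr]]].
have Sl : S (last z2 r).
  have := mem_last z2 r; rewrite inE => /orP [/eqP -> //|]; exact: Sr.
have := H _ _ _ Yy S1 Sl e1 e2 => E.
move: U => /= /andP [_ /andP [nz1 _]].
by move: nz1; rewrite E mem_last.
Qed.

Lemma nocyc (T:eqType) (e: rel T) (S Y: pred T) :
 (forall x y, e x y -> Y x || Y y) ->
 (forall y a b, Y y -> S a -> S b -> e y a -> e b y -> a = b) ->
 forall c, uniq c -> 3 <= size c -> all S c -> cycle e c -> False.
Proof.
move=> HY H [|h [|z1 [|z2 r]]] // U _ A C.
have eh : e h z1 by move: C => /= /andP[].
case/orP: (HY _ _ eh) => Yh.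
  exact: (nocyc_core H Yh (s := z2::r) isT U A C).
apply: (nocyc_core H Yh (z1 := z2) (s := rcons r h)).
- by rewrite size_rcons.
- by rewrite -(rot_uniq 1) rot1_cons in U.
- by move: A => /= /andP[Sh /andP[S1 /andP[S2 Sr]]]; rewrite /= all_rcons S1 S2 Sr Sh.
- by rewrite -(rot_cycle 1) rot1_cons in C.
Qed.

Definition adj (m l k x y : nat) : bool :=
  [&& x < m, m <= y & (l <= x) || ((x * k <= y - m) && (y - m < x * k + k))].

Lemma blk a b k t : a * k <= t -> t < a * k + k -> b * k <= t -> t < b * k + k -> a = b.
Proof.
move=> h1 h2 h3 h4.
case: (ltngtP a b) => // hab.
- have : (a.+1) * k <= b * k by rewrite leq_mul2r hab orbT.
  rewrite mulSn; lia.
- have : (b.+1) * k <= a * k by rewrite leq_mul2r hab orbT.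
  rewrite mulSn; lia.
Qed.

Lemma card_ge_iv' n a b k (A : {set 'I_n}) : b <= n -> k <= b - a ->
  (forall y, a <= nat_of_ord y < b -> y \in A) -> k <= #|A|.
Proof. move=> h1 h2 h3; exact: leq_trans h2 (card_ge_iv h1 h3). Qed.

Lemma card_le_iv' n a b k (A : {set 'I_n}) : b <= n -> b - a <= k ->
  (forall y, y \in A -> a <= nat_of_ord y < b) -> #|A| <= k.
Proof. move=> h1 h2 h3; exact: leq_trans (card_le_iv h1 h3) h2. Qed.

Lemma ordE n (x y : 'I_n) : (x == y) = (nat_of_ord x == nat_of_ord y).
Proof. by []. Qed.
Theorem theorem2p7 (k l : nat) (hk : 2 <= k) (hl : (l == 1) || (l == 2)) :
  forall N : nat, exists n : nat, N < n /\
    exists (e : rel 'I_n) (V1 V2 : {set 'I_n}),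
      [/\ simple_graph e, balanced_bipartite e V1 V2, min_degree_eq e k &
          forest_number_eq e (n %/ 2 + l)].
Proof.
move=> N.
have hl1 : 1 <= l <= 2 by case/orP: hl => /eqP ->.
set m := N + 2 * k + 2.
have hlk : l * k <= 2 * k by rewrite leq_mul2r; lia.
exists (m + m); split; first lia.
have hdiv : (m + m) %/ 2 = m by rewrite addnn -muln2 mulnK.
rewrite hdiv.
exists (fun x y : 'I_(m+m) => adj m l k x y || adj m l k y x).
exists [set x : 'I_(m+m) | x < m], [set x : 'I_(m+m) | m <= x].
split.
- split; first by move=> x y; rewrite orbC.
  move=> x; rewrite orbb /adj; apply/negbTE/negP => /and3P[a b _]; lia.
- split.
  + rewrite disjoint_subset; apply/subsetP => x; rewrite !inE; lia.
  + apply/setP => x; rewrite !inE; by case: (ltnP x m).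
  + rewrite (@card_iv _ 0 m) ?(@card_iv _ m (m+m)) //; first by rewrite subn0 addnK.
    * move=> y; rewrite inE; apply/idP/idP; have := ltn_ord y; lia.
    * lia.
    * move=> y; rewrite inE; apply/idP/idP; lia.
  + move=> x y; rewrite !inE /adj => /orP[] /and3P[a b _]; lia.
- split.
  + move=> x; rewrite /deg.
    have hx := ltn_ord x.
    case: (ltnP x l) => hxl.
    * have hxk : x * k + k <= m.
        have : x.+1 * k <= l * k by rewrite leq_mul2r hxl orbT.
        rewrite mulSn; lia.
      apply: (card_ge_iv' (a := m + x * k) (b := m + x * k + k)); [lia|lia|].
      move=> y hy; rewrite inE /adj /=; lia.
    * case: (ltnP x m) => hxm.
      - apply: (card_ge_iv' (a := m) (b := m + m)); [lia|lia|].
        move=> y hy; rewrite inE /adj /=; lia.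
      - apply: (card_ge_iv' (a := l) (b := m)); [lia|lia|].
        move=> y hy; rewrite inE /adj /=; lia.
  + have h0 : 0 < m + m by lia.
    exists (Ordinal h0); rewrite /deg; apply/eqP; rewrite eqn_leq; apply/andP; split.
    * apply: (card_le_iv' (a := m) (b := m + k)); [lia|lia|].
      move=> y; have := ltn_ord y; rewrite inE /adj /=; lia.
    * apply: (card_ge_iv' (a := m) (b := m + k)); [lia|lia|].
      move=> y hy; rewrite inE /adj /=; lia.
- split.
  + exists [set y : 'I_(m+m) | (y < l) || (m <= y)]; split.
    * move=> [c /and4P[U sz A C]].
      apply: (@nocyc _ (fun x y : 'I_(m+m) => adj m l k x y || adj m l k y x)
                (fun y => y \in [set y : 'I_(m+m) | (y < l) || (m <= y)])
                (fun y : 'I_(m+m) => m <= y) _ _ c U sz A C).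
      - move=> x y; rewrite /adj; lia.
      - move=> y a b; rewrite !inE /adj => hy ha hb hya hby.
        apply: ord_inj.
        have [ha1 ha2] : a * k <= y - m /\ y - m < a * k + k by lia.
        have [hb1 hb2] : b * k <= y - m /\ y - m < b * k + k by lia.
        exact: blk ha1 ha2 hb1 hb2.
    * have e1 : [set y : 'I_(m+m) | (y < l) || (m <= y)] =
                [set y : 'I_(m+m) | y < l] :|: [set y : 'I_(m+m) | m <= y].
        by apply/setP => y; rewrite !inE.
      have h1 := cardsUI [set y : 'I_(m+m) | y < l] [set y : 'I_(m+m) | m <= y].
      have h2 : #|[set y : 'I_(m+m) | y < l] :&: [set y : 'I_(m+m) | m <= y]| <= 0.
        apply: (card_le_iv' (a:=0) (b:=0)); [lia|lia|move=> y; rewrite !inE; lia].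
      have h3 : #|[set y : 'I_(m+m) | y < l]| = l.
        rewrite (card_iv (a:=0) (b:=l)); [lia|lia|move=> y; rewrite inE; apply/idP/idP; lia].
      have h4 : #|[set y : 'I_(m+m) | m <= y]| = m.
        rewrite (card_iv (a:=m) (b:=m+m)); [lia|lia|move=> y; rewrite inE; apply/idP/idP; have := ltn_ord y; lia].
      rewrite e1; lia.
  + move=> S hS; rewrite leqNgt; apply/negP => big; apply: hS.
    set SA := S :&: [set y : 'I_(m+m) | y < l].
    set SX := S :&: [set y : 'I_(m+m) | l <= y < m].
    set SY := S :&: [set y : 'I_(m+m) | m <= y].
    have hsum : #|S| <= #|SA| + #|SX| + #|SY|.
      have -> : S = SA :|: SX :|: SY.
        apply/setP => y; rewrite !inE; case: (y \in S) => /=; last by [].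
        have := ltn_ord y; lia.
      have := cardsUI (SA :|: SX) SY; have := cardsUI SA SX; lia.
    have hA : #|SA| <= l.
      apply: (card_le_iv' (a:=0) (b:=l)); [lia|lia|move=> y; rewrite !inE => /andP[_ h]; lia].
    have hX : #|SX| <= m - l.
      apply: (card_le_iv' (a:=l) (b:=m)); [lia|lia|move=> y; rewrite !inE => /andP[_ h]; lia].
    have hY : #|SY| <= m.
      apply: (card_le_iv' (a:=m) (b:=m+m)); [lia|lia|move=> y; have := ltn_ord y; rewrite !inE => h /andP[_ h']; lia].
    case: (leqP 2 #|SX|) => hX2.
    * case: (leqP 2 #|SY|) => hY2; last lia.
      move: hX2 => /card_gt1P [x1 [x2 [hx1 hx2 nx]]].
      move: hY2 => /card_gt1P [y1 [y2 [hy1 hy2 ny]]].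
      move: hx1 hx2 hy1 hy2; rewrite !inE => /andP[Sx1 hx1] /andP[Sx2 hx2] /andP[Sy1 hy1] /andP[Sy2 hy2].
      exists [:: x1; y1; x2; y2]; apply/and4P; split.
      - rewrite /= !inE !ordE; rewrite ordE in nx; rewrite ordE in ny; lia.
      - by [].
      - by rewrite /= Sx1 Sy1 Sx2 Sy2.
      - rewrite /= /adj; lia.
    * have /card_gt0P [x hx] : 0 < #|SX| by lia.
      have /card_gt0P [a ha] : 0 < #|SA| by lia.
      have SYfull : forall y : 'I_(m+m), m <= y -> y \in S.
        move=> y hy; apply/negPn/negP => ny.
        have hsub : SY \subset [set z : 'I_(m+m) | m <= z] :\ y.
          apply/subsetP => z; rewrite !inE => /andP[Sz hz]; rewrite hz andbT.
          apply/eqP => ez; rewrite ez in Sz; by rewrite Sz in ny.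
        have := subset_leq_card hsub.
        have := cardsD1 y [set z : 'I_(m+m) | m <= z].
        have h4 : #|[set y : 'I_(m+m) | m <= y]| = m.
          rewrite (card_iv (a:=m) (b:=m+m)); [lia|lia|move=> z; rewrite inE; apply/idP/idP; have := ltn_ord z; lia].
        rewrite h4 inE hy; lia.
      move: hx ha; rewrite !inE => /andP[Sx hx] /andP[Sa ha].
      have hak : a * k + k <= m.
        have : a.+1 * k <= l * k by rewrite leq_mul2r ha orbT.
        rewrite mulSn; lia.
      have hy1 : m + a * k < m + m by lia.
      have hy2 : m + a * k + 1 < m + m by lia.
      have Sy1 := SYfull (Ordinal hy1) (leq_addr _ _).
      have Sy2 : Ordinal hy2 \in S by apply: SYfull => /=; lia.
      exists [:: a; Ordinal hy1; x; Ordinal hy2]; apply/and4P; split.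
      - rewrite /= !inE !ordE /=; lia.
      - by [].
      - by rewrite /= Sa Sy1 Sx Sy2.
      - rewrite /= /adj; lia.
Qed.
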